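(* Let $n\ge 2$ and let $D,D'\subseteq\Phi^+$ be rook placements. If $\Omega_D\subseteq\overline{\Omega_{D'}}$ (Zariski closure), then $\sigma_D\le_B\sigma_{D'}$, where $\le_B$ is the Bruhat–Chevalley order on the symmetric group $S_{2n-2}$.
   Context: Let $B\subseteq \mathrm{GL}_n(\mathbb{C})$ be the group of invertible upper-triangular matrices. Let $\mathfrak{n}$ be the Lie algebra of strictly upper-triangular $n\times n$ matrices; identify $\mathfrak{n}^*$ with the strictly lower-triangular matrices via $\langle\lambda,x\rangle=\mathrm{tr}(\lambda x)$, so that $b.\lambda=(b\lambda b^{-1})_{\mathrm{low}}$ ($X_{\mathrm{low}}$ = strictly lower-triangular part). Let $e_{i,j}$ be the elementary matrix units. Let $\Phi^+=\{(i,j)\in\mathbb{Z}^2:1\le j<i\le n\}$, with rows $\mathcal{R}_k=\{(k,s)\in\Phi^+\}$ and columns $\mathcal{C}_k=\{(r,k)\in\Phi^+\}$. A rook placement is a subset $D\subseteq\Phi^+$ with $|D\cap\mathcal{R}_k|\le 1$ and $|D\cap\mathcal{C}_k|\le1$ for all $k$. Put $f_D=\sum_{(i,j)\in D}e_{i,j}$ and $\Omega_D=B.f_D$. For a rook placement $D=\{(i_1,j_1),\dots,(i_s,j_s)\}$, the involution $\sigma_D\in S_{2n-2}$ is the product of the (pairwise disjoint) transpositions $(2i_r-2,\,2j_r-1)$, $1\le r\le s$. *)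

(* Defs.v *)
From HB Require Import structures.
From mathcomp Require Import all_boot all_order all_fingroup all_algebra.
Set Implicit Arguments. Unset Strict Implicit. Unset Printing Implicit Defensive.
Import GRing.Theory.
Local Open Scope ring_scope.

(* Indices are 0-based: the paper's (i,j) with 1 <= j < i <= n is our
   (i-1, j-1) : 'I_n * 'I_n with j-1 < i-1. *)

Definition in_Phi_plus (n : nat) (p : 'I_n * 'I_n) : bool := (p.2 < p.1)%N.

Definition rook_placement (n : nat) (D : {set 'I_n * 'I_n}) : Prop :=
  [/\ {subset D <= in_Phi_plus (n:=n)},
      (forall k : 'I_n, #|[set p in D | p.1 == k]| <= 1)%N &
      (forall k : 'I_n, #|[set p in D | p.2 == k]| <= 1)%N].

Section Orbits.
Variable F : fieldType.
Variable n : nat.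

Definition lowpart (A : 'M[F]_n) : 'M[F]_n :=
  \matrix_(i, j) (if (j < i)%N then A i j else 0).

Definition in_B (b : 'M[F]_n) : Prop :=
  b \in unitmx /\ (forall i j : 'I_n, (j < i)%N -> b i j = 0).

Definition B_act (b lam : 'M[F]_n) : 'M[F]_n := lowpart (b *m lam *m invmx b).

Definition f_D (D : {set 'I_n * 'I_n}) : 'M[F]_n :=
  \matrix_(i, j) (if (i, j) \in D then 1 else 0).

Definition Omega (D : {set 'I_n * 'I_n}) (x : 'M[F]_n) : Prop :=
  exists b, in_B b /\ x = B_act b (f_D D).

End Orbits.

Inductive mpoly (F : Type) (V : Type) : Type :=
| MConst of F
| MVar of V
| MAdd of mpoly F V & mpoly F V
| MMul of mpoly F V & mpoly F V
| MOpp of mpoly F V.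

Fixpoint meval (F : ringType) (V : Type) (x : V -> F) (p : mpoly F V) : F :=
  match p with
  | MConst c => c
  | MVar v => x v
  | MAdd p q => meval x p + meval x q
  | MMul p q => meval x p * meval x q
  | MOpp p => - meval x p
  end.

Definition zariski_closure (F : ringType) (n : nat) (S : 'M[F]_n -> Prop)
  (x : 'M[F]_n) : Prop :=
  forall p : mpoly F ('I_n * 'I_n),
    (forall y, S y -> meval (fun v => y v.1 v.2) p = 0) ->
    meval (fun v => x v.1 v.2) p = 0.

Definition inv_count (m : nat) (s : {perm 'I_m}) : nat :=
  #|[set p : 'I_m * 'I_m | (p.1 < p.2)%N && (s p.2 < s p.1)%N]|.

Definition is_transposition (m : nat) (t : {perm 'I_m}) : bool :=
  [exists a : 'I_m, exists b : 'I_m, (a != b) && (t == tperm a b)].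

Definition bruhat_step (m : nat) : rel {perm 'I_m} :=
  fun u v => [exists t, is_transposition t && (v == (u * t)%g)
                        && (inv_count u < inv_count v)%N].

Definition bruhat_le (m : nat) (u v : {perm 'I_m}) : bool :=
  connect (@bruhat_step m) u v.

(** Transposition of the positions with (0-based) values a, b in 'I_m,
    or identity if out of range (never happens below). *)
Definition tr_nat (m a b : nat) : {perm 'I_m} :=
  match @insub nat (fun k => (k < m)%N) 'I_m a,
        @insub nat (fun k => (k < m)%N) 'I_m b with
  | Some x, Some y => tperm x y
  | _, _ => 1%g
  end.

(** sigma_D in S_{2n-2}: product of transpositions (2i-2, 2j-1) (1-based),
    i.e. (2i0-1, 2j0) 0-based with i0 = i-1, j0 = j-1. *)
Definition sigma_D (n : nat) (D : {set 'I_n * 'I_n}) : {perm 'I_(n.*2 - 2)} :=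
  (\prod_(p in D) tr_nat (n.*2 - 2) ((nat_of_ord p.1).*2 - 1) (nat_of_ord p.2).*2)%g.

(* Main.v *)
Require Import Defs.
From HB Require Import structures.
From mathcomp Require Import all_boot all_order all_fingroup all_algebra.
From mathcomp Require Import zify.
Set Implicit Arguments. Unset Strict Implicit. Unset Printing Implicit Defensive.

Section Comb.
Variable m : nat.
Implicit Types u v w : {perm 'I_m}.

Definition rk u (p q : nat) : nat := \sum_(k < m) ((k < p) && (q <= u k)).

Lemma swap_vals u (a b : 'I_m) (k : 'I_m) :
  (u * tperm (u a) (u b))%g k = if k == a then u b else if k == b then u a else u k.
Proof.
rewrite permM; case: eqP => [->|ka]; first by rewrite tpermL.
case: eqP => [->|kb]; first by rewrite tpermR.
rewrite tpermD // (inj_eq perm_inj); apply/eqP => // h; [exact: ka (esym h)|exact: kb (esym h)].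
Qed.

Lemma rk_swap u (a b : 'I_m) p q : a < b -> u a < u b ->
  rk (u * tperm (u a) (u b)) p q = rk u p q + ((a < p <= b) && (u a < q <= u b)).
Proof.
move=> ab uab; rewrite /rk (bigD1 a) //= (bigD1 b) //=; last by rewrite -val_eqE /= neq_ltn ab orbT.
rewrite [in RHS](bigD1 a) //= [in RHS](bigD1 b) //=; last by rewrite -val_eqE /= neq_ltn ab orbT.
rewrite !swap_vals eqxx.
have -> : (b == a) = false by apply/negbTE; rewrite -val_eqE /= neq_ltn ab orbT.
rewrite eqxx.
under eq_bigr => k /andP[ka kb] do rewrite swap_vals (negbTE ka) (negbTE kb).
move: ab uab; set A := nat_of_ord a; set B := nat_of_ord b; set X := nat_of_ord (u a); set Y := nat_of_ord (u b).
move=> ab uab.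
set S := \sum_(i | _) _.
case: (ltnP A p); case: (ltnP B p); case: (leqP q X); case: (leqP q Y) => //= *; lia.
Qed.

End Comb.

Lemma tpermE' (T : finType) (a b k : T) :
  tperm a b k = if k == a then b else if k == b then a else k.
Proof.
case: eqP => [->|ka]; first by rewrite tpermL.
case: eqP => [->|kb]; first by rewrite tpermR.
by rewrite tpermD //; apply/eqP => h; [apply: ka|apply: kb].
Qed.

Lemma inv_lt m (u : {perm 'I_m}) (a b : 'I_m) : a < b -> u a < u b ->
  inv_count u < inv_count (u * tperm (u a) (u b))%g.
Proof.
move=> ab uab; set w := (u * _)%g.
have wE : forall k, w k = u (tperm a b k).
  by move=> k; rewrite /w swap_vals tpermE'; do 2 case: eqP => //.
set t := tperm a b.
pose Xu := [set p : 'I_m * 'I_m | (p.1 < p.2) && (u p.2 < u p.1)].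
pose Xw := [set p : 'I_m * 'I_m | (p.1 < p.2) && (w p.2 < w p.1)].
pose psi := fun p : 'I_m * 'I_m => if p \in Xw then p else (t p.1, t p.2).
have abXw : (a, b) \in Xw by rewrite inE /= !wE /t tpermL tpermR ab.
have inj : {in Xu &, injective psi}.
  move=> [x1 x2] [y1 y2]; rewrite /psi !inE /= => /andP[x12 ux] /andP[y12 uy].
  rewrite !wE.
  case: ifP => hx; case: ifP => hy //.
  - by move=> [e1 e2]; move: ux hy; rewrite e1 e2 y12 /= => ->.
  - by move=> [e1 e2]; move: uy hx; rewrite -e1 -e2 x12 /= => ->.
  - by move=> [/perm_inj -> /perm_inj ->].
have sub : [set psi x | x in Xu] \subset Xw :\ (a, b).
  apply/subsetP => _ /imsetP[[x1 x2] xin ->]; move: xin; rewrite inE /= => /andP[x12 ux].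
  rewrite /psi; case: ifP => hx.
    rewrite in_setD1 hx andbT; apply/eqP => -[e1 e2]; move: ux; rewrite e1 e2; lia.
  rewrite in_setD1 inE /= !wE /t !tpermK ux andbT.
  move: hx; rewrite inE /= !wE x12 /= => hx.
  apply/andP; split.
    apply/eqP => -[e1 e2].
    have h1 : x1 = b by rewrite -(tpermK a b x1) e1 tpermL.
    have h2 : x2 = a by rewrite -(tpermK a b x2) e2 tpermR.
    by move: x12 ab; rewrite h1 h2; lia.
  move: hx; rewrite !tpermE'.
  have vneq : forall x y : 'I_m, x <> y -> val x <> val y.
    by move=> x y nxy h; apply: nxy; apply: val_inj.
  case: (x1 =P a) => [e1|/vneq n1]; case: (x1 =P b) => [e3|/vneq n3];
  case: (x2 =P a) => [e4|/vneq n4]; case: (x2 =P b) => [e2|/vneq n2];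
  rewrite ?e1 ?e2 ?e3 ?e4 in x12 ux * => hx; try subst; try lia.
have := subset_leq_card sub; rewrite card_in_imset // => h.
change (#|Xu| < #|Xw|); rewrite (cardsD1 (a, b) Xw) abXw; lia.
Qed.


Section Crit.
Variable m : nat.
Implicit Types u v w : {perm 'I_m}.

Lemma rk_succ w (p : 'I_m) q : rk w p.+1 q = rk w p q + (q <= w p).
Proof.
rewrite /rk (bigD1 p) //= [X in _ = X + _](bigD1 p) //= ltnn ltnSn /= addnC add0n.
congr (_ + _); apply: eq_bigr => k kp; rewrite ltnS leq_eqVlt.
by have -> : (nat_of_ord k == p) = false by apply/negbTE; rewrite val_eqE.
Qed.

Lemma rk_eq_below u v (a : nat) q : (forall k : 'I_m, k < a -> u k = v k) ->
  rk u a q = rk v a q.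
Proof. by move=> h; apply: eq_bigr => k _; case: ltnP => //= /h ->. Qed.

Definition cnt w (p q1 q2 : nat) : nat :=
  \sum_(k < m) [&& k < p, q1 <= w k & w k < q2].

Lemma rk_cnt w p q q2 : q <= q2 -> rk w p q = rk w p q2 + cnt w p q q2.
Proof.
move=> qq; rewrite /rk /cnt -big_split; apply: eq_bigr => k _ /=.
case: (k < p) => //=; case: (leqP q (w k)); case: (leqP q2 (w k)) => //= *; lia.
Qed.

Lemma step_exists u v : u != v -> (forall p q, rk u p q <= rk v p q) ->
  exists a b : 'I_m, [/\ a < b, u a < u b &
     forall p q, rk (u * tperm (u a) (u b))%g p q <= rk v p q].
Proof.
move=> nuv H.
have [k0 hk0] : exists k0, u k0 != v k0.
  apply/existsP; apply: contraR nuv => /existsPn h; apply/eqP/permP => k.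
  by move: (h k); rewrite negbK => /eqP.
case: (@arg_minnP _ k0 (fun k => u k != v k) (fun k : 'I_m => nat_of_ord k) hk0) => a Pa amin.
have below : forall k : 'I_m, k < a -> u k = v k.
  move=> k ka; apply/eqP; apply: contraTT ka => /amin; rewrite -leqNgt //.
have uva : u a < v a.
  rewrite ltn_neqAle val_eqE Pa /=; rewrite leqNgt; apply/negP => vu.
  have := H a.+1 (u a); rewrite !rk_succ (rk_eq_below _ below) leqnn.
  have -> : (u a <= v a) = false by apply/negbTE; rewrite -ltnNge.
  lia.
set c := ((u^-1)%g (v a)).
have uc : u c = v a by rewrite /c permKV.
have ac : a < c.
  rewrite ltn_neqAle; apply/andP; split.
    by apply/eqP => /val_inj e; move: Pa; rewrite -uc -e eqxx.
  rewrite leqNgt; apply/negP => ca; have := below _ ca; rewrite uc => /perm_inj e.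
  by move: ca; rewrite e ltnn.
have Pc : [&& a < c, u a < u c & u c <= v a] by rewrite ac uc uva leqnn.
case: (@arg_minnP _ c (fun k : 'I_m => [&& a < k, u a < u k & u k <= v a]) (fun k : 'I_m => nat_of_ord k) Pc) => b /and3P[ab uab ubva] bmin.
exists a, b; split => // p q.
rewrite rk_swap //.
case: (boolP [&& a < p <= b, u a < q & q <= u b]); last by rewrite addn0.
case/and3P => /andP[ap pb] aq qb; rewrite addn1.
have qva : q <= (v a).+1 by lia.
rewrite (rk_cnt u p qva) (rk_cnt v p qva).
have e1 : cnt u p q (v a).+1 = cnt u a q (v a).+1.
  apply: eq_bigr => k _; case: (ltnP k a) => ka.
    by rewrite (ltn_trans ka ap).
  case: (ltnP k p) => kp //=.
  have [e|ne] := eqVneq k a; first by rewrite e; case: leqP => //; lia.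
  have ak : a < k by rewrite ltn_neqAle ka andbT eq_sym val_eqE.
  case: (leqP q (u k)) => //= qk; case: (ltnP (u k) (v a).+1) => //= kva.
  have : b <= k by apply: bmin; rewrite ak /=; apply/andP; split; lia.
  lia.
have e2 : cnt u a q (v a).+1 = cnt v a q (v a).+1.
  by apply: eq_bigr => k _; case: ltnP => //= /below ->.
have e3 : cnt v a q (v a).+1 < cnt v p q (v a).+1.
  rewrite /cnt (bigD1 a) //= [X in _ < X](bigD1 a) //= ltnn ap ltnSn andbT.
  have -> : q <= v a by lia.
  rewrite add0n add1n ltnS; apply: leq_sum => k _.
  by case: (ltnP k a) => //= ka; rewrite (ltn_trans ka ap).
have := H p (v a).+1; lia.
Qed.

End Crit.

Lemma sum_lt (I : finType) (f g : I -> nat) j :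
  (forall i, f i <= g i) -> f j < g j -> \sum_i f i < \sum_i g i.
Proof.
move=> h hj; rewrite (bigD1 j) // [X in _ < X](bigD1 j) //=.
have := @leq_sum _ (index_enum I) (fun i => i != j) f g (fun i _ => h i); lia.
Qed.

Section Crit2.
Variable m : nat.
Definition Nsum (v : {perm 'I_m}) := \sum_(p < m.+1) \sum_(q < m.+1) rk v p q.

Lemma step_meas (u v : {perm 'I_m}) : u != v -> (forall p q, rk u p q <= rk v p q) ->
  exists w, [/\ bruhat_step u w, Nsum u < Nsum w & forall p q, rk w p q <= rk v p q].
Proof.
move=> nuv H; have [a [b [ab uab Hw]]] := step_exists nuv H.
exists (u * tperm (u a) (u b))%g; split => //.
  rewrite /bruhat_step /=; apply/existsP; exists (tperm (u a) (u b)); rewrite eqxx inv_lt // andbT /=.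
  rewrite andbT /is_transposition; apply/existsP; exists (u a); apply/existsP; exists (u b); rewrite eqxx andbT.
  by rewrite -val_eqE /= neq_ltn uab.
have am : a.+1 < m.+1 by have := ltn_ord b; lia.
apply: (sum_lt (j := Ordinal am)) => [p|].
  by apply: leq_sum => q _; rewrite rk_swap //; apply: leq_addr.
have bm : u b < m.+1 by have := ltn_ord (u b); lia.
apply: (sum_lt (j := Ordinal bm)) => [q|].
  by rewrite rk_swap //; apply: leq_addr.
rewrite rk_swap //= ltnSn ab uab leqnn /= addn1 //.
Qed.

Lemma crit (u v : {perm 'I_m}) : (forall p q, rk u p q <= rk v p q) -> bruhat_le u v.
Proof.
move=> H; have : Nsum v - Nsum u <= Nsum v - Nsum u by [].
move: {2}(Nsum v - Nsum u) => d.
elim: d u H => [|d IH] u H hd; (case: (eqVneq u v) => [->|nuv]; first exact: connect0);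
  have [w [st Nuw Hw]] := step_meas nuv H;
  have Nwv : Nsum w <= Nsum v by (apply: leq_sum => p _; apply: leq_sum => q _; apply: Hw).
  lia.
apply: connect_trans (connect1 st) (IH w Hw _); lia.
Qed.
End Crit2.

Lemma rook_row n (D : {set 'I_n * 'I_n}) : rook_placement D ->
  forall x y, x \in D -> y \in D -> x.1 = y.1 -> x = y.
Proof.
case=> _ hr _ x y xD yD e; have := hr x.1; move/card_le1_eqP; apply.
  by rewrite !inE yD e eqxx.
by rewrite !inE xD eqxx.
Qed.

Lemma rook_col n (D : {set 'I_n * 'I_n}) : rook_placement D ->
  forall x y, x \in D -> y \in D -> x.2 = y.2 -> x = y.
Proof.
case=> _ _ hc x y xD yD e; have := hc x.2; move/card_le1_eqP; apply.
  by rewrite !inE yD e eqxx.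
by rewrite !inE xD eqxx.
Qed.

Lemma rook_lt n (D : {set 'I_n * 'I_n}) : rook_placement D ->
  forall x, x \in D -> x.2 < x.1.
Proof. by case=> h _ _ x /h. Qed.

Lemma tr_nat_eq m a b (ha : a < m) (hb : b < m) :
  tr_nat m a b = tperm (Ordinal ha) (Ordinal hb).
Proof. by rewrite /tr_nat (@insubT _ (fun k => k < m) 'I_m a ha) (@insubT _ (fun k => k < m) 'I_m b hb). Qed.

Lemma rk_tperm_fix m (s : {perm 'I_m}) (a b : 'I_m) p q : a < b -> s a = a -> s b = b ->
  rk (tperm a b * s)%g p q = rk s p q + ((a < p <= b) && (a < q <= b)).
Proof.
move=> ab sa sb.
have -> : (tperm a b * s)%g = (s * tperm (s a) (s b))%g.
  apply/permP => k; rewrite !permM sa sb.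
  case: (eqVneq k a) => [->|ka]; first by rewrite tpermL sb sa tpermL.
  case: (eqVneq k b) => [->|kb]; first by rewrite tpermR sa sb tpermR.
  have ak : a != k by rewrite eq_sym.
  have bk : b != k by rewrite eq_sym.
  rewrite (tpermD ak bk) tpermD //; [by rewrite -{1}sa (inj_eq perm_inj)|by rewrite -{1}sb (inj_eq perm_inj)].
by rewrite rk_swap ?sa ?sb.
Qed.

Section Sig.
Variable n : nat.
Variable D : {set 'I_n * 'I_n}.
Hypothesis hD : rook_placement D.
Local Notation m := (n.*2 - 2).

Definition Av (x : 'I_n * 'I_n) : nat := (nat_of_ord x.1).*2 - 1.
Definition Bv (x : 'I_n * 'I_n) : nat := (nat_of_ord x.2).*2.
Definition rect (x : 'I_n * 'I_n) (p q : nat) : nat :=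
  [&& Bv x < p, p <= Av x, Bv x < q & q <= Av x].

Definition Fx (x : 'I_n * 'I_n) : {perm 'I_m} := tr_nat m (Av x) (Bv x).

Lemma AB_bounds x : x \in D -> [/\ Bv x < Av x, Av x < m & Bv x < m].
Proof.
move=> xD; have := rook_lt hD xD; have := ltn_ord x.1; rewrite /Av /Bv -!muln2; case: x xD => [[a ?] [b ?]] _ /= h1 h2; split; lia.
Qed.

Lemma Fx_fix x (z : 'I_m) : val z != Av x -> val z != Bv x -> Fx x z = z.
Proof.
move=> za zb; rewrite /Fx /tr_nat.
case: (@insubP _ (fun k => k < m) 'I_m (Av x)) => [a _ va|_];
case: (@insubP _ (fun k => k < m) 'I_m (Bv x)) => [b _ vb|_] //=; try by rewrite perm1.
by rewrite tpermD // -val_eqE ?va ?vb eq_sym.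
Qed.

Lemma prod_fix (s : seq ('I_n * 'I_n)) (z : 'I_m) :
  (forall x, x \in s -> (val z != Av x) && (val z != Bv x)) ->
  (\prod_(x <- s) Fx x)%g z = z.
Proof.
elim: s => [|y s IH] h; first by rewrite big_nil perm1.
rewrite big_cons permM; have /andP[h1 h2] := h y (mem_head _ _).
by rewrite Fx_fix //; apply: IH => x xs; apply: h; rewrite inE xs orbT.
Qed.

Lemma rk_prod (s : seq ('I_n * 'I_n)) p q : uniq s -> {subset s <= D} ->
  rk (\prod_(x <- s) Fx x)%g p q = rk (1%g : {perm 'I_m}) p q + \sum_(x <- s) rect x p q.
Proof.
elim: s => [|y s IH] /=; first by rewrite big_nil big_nil addn0.
case/andP => ys us sD.
have yD : y \in D by apply: sD; exact: mem_head.
have sD' : {subset s <= D} by move=> x xs; apply: sD; rewrite inE xs orbT.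
have [bla ha hb] := AB_bounds yD.
have Fy : Fx y = tperm (Ordinal hb) (Ordinal ha) by rewrite /Fx tr_nat_eq tpermC.
have distinct : forall x, x \in s -> [&& Av y != Av x, Av y != Bv x, Bv y != Av x & Bv y != Bv x].
  move=> x xs; have xD := sD' x xs.
  have nxy : x != y by apply: contraNneq ys => <-.
  have hx := rook_lt hD xD; have hy := rook_lt hD yD.
  have r1 : nat_of_ord x.1 != y.1.
    by apply: contra nxy => /eqP e; apply/eqP; apply: (rook_row hD xD yD); apply: val_inj.
  have r2 : nat_of_ord x.2 != y.2.
    by apply: contra nxy => /eqP e; apply/eqP; apply: (rook_col hD xD yD); apply: val_inj.
  move: hx hy r1 r2; rewrite /Av /Bv -!muln2.
  case: x {xs xD nxy} => [[a1 ?] [a2 ?]]; case: y {ys yD sD bla ha hb Fy} => [[b1 ?] [b2 ?]] /=.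
  move=> *; repeat (apply/andP; split); apply/eqP; lia.
rewrite big_cons Fy rk_tperm_fix //; first last.
- by apply: prod_fix => x xs; have /and4P[h1 h2 h3 h4] := distinct x xs; rewrite /= h1 h2.
- by apply: prod_fix => x xs; have /and4P[h1 h2 h3 h4] := distinct x xs; rewrite /= h3 h4.
rewrite IH // big_cons /rect /=; lia.
Qed.

End Sig.

Section Geo.
Import GRing.Theory.
Variable F : fieldType.
Local Open Scope ring_scope.

Definition msum V (l : seq (mpoly F V)) : mpoly F V := foldr (@MAdd F V) (MConst _ 0) l.
Definition mprod V (l : seq (mpoly F V)) : mpoly F V := foldr (@MMul F V) (MConst _ 1) l.

Lemma meval_msum V (x : V -> F) l : meval x (msum l) = \sum_(p <- l) meval x p.
Proof. by elim: l => [|a l IH]; rewrite ?big_nil ?big_cons //= IH. Qed.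

Lemma meval_mprod V (x : V -> F) l : meval x (mprod l) = \prod_(p <- l) meval x p.
Proof. by elim: l => [|a l IH]; rewrite ?big_nil ?big_cons //= IH. Qed.

Variable n : nat.

Definition detpoly k (r c : 'I_k -> 'I_n) : mpoly F ('I_n * 'I_n) :=
  msum [seq MMul (MConst _ ((-1) ^+ s)) (mprod [seq MVar F (r i, c (s i)) | i <- index_enum 'I_k])
       | s : {perm 'I_k} <- index_enum {perm 'I_k}].

Lemma meval_detpoly k (r c : 'I_k -> 'I_n) (x : 'M[F]_n) :
  meval (fun v => x v.1 v.2) (detpoly r c) = \det (\matrix_(s, t) x (r s) (c t)).
Proof.
rewrite meval_msum big_map /determinant; apply: eq_bigr => s _ /=.
rewrite meval_mprod big_map; congr (_ * _); apply: eq_bigr => i _; by rewrite mxE.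
Qed.

Lemma invmx_upper (b : 'M[F]_n) : in_B b -> forall i j : 'I_n, (j < i)%N -> invmx b i j = 0.
Proof.
move=> [bu bt] i j ji.
have bc : b *m invmx b = 1%:M := mulmxV bu.
have diag : forall k, b k k != 0.
  move=> k; have : \det b != 0 by rewrite -unitfE -unitmxE.
  rewrite -det_tr det_trig; last by apply/is_trig_mxP => i0 j0 h; rewrite mxE bt.
  by move/prodf_neq0 => /(_ k isT); rewrite mxE.
suff : forall d (i : 'I_n), (n - i <= d)%N -> (j < i)%N -> invmx b i j = 0.
  by move=> H; apply: (H _ i (leqnn _) ji).
elim=> [|d IH] i0 hd ji0; first by have := ltn_ord i0; lia.
have := congr1 (fun M : 'M[F]_n => M i0 j) bc; rewrite !mxE (bigD1 i0) //= big1 ?addr0.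
  have -> : (i0 == j) = false by apply/negbTE; rewrite -val_eqE /= neq_ltn ji0 orbT.
  by move/eqP; rewrite mulf_eq0 (negbTE (diag i0)) /= => /eqP.
move=> k nk; case: (ltnP k i0) => h; first by rewrite bt // mul0r.
rewrite IH ?mulr0 //; last by apply: leq_trans ji0 h.
have : (i0 < k)%N by rewrite ltn_neqAle h andbT eq_sym val_eqE.
have := ltn_ord k; lia.
Qed.

Lemma fD_in_Omega (D : {set 'I_n * 'I_n}) : rook_placement D -> Omega D (@f_D F n D).
Proof.
move=> hD; exists 1%:M; split.
  split; first exact: unitmx1.
  by move=> i j ji; rewrite mxE; have -> : (i == j) = false by apply/negbTE; rewrite -val_eqE /= neq_ltn ji orbT.
rewrite /B_act invmx1 mul1mx mulmx1; apply/matrixP => i j; rewrite !mxE.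
case: ltnP => //; case: ifP => // h; have := rook_lt hD h; rewrite /=; lia.
Qed.

Lemma count_le (D E : {set 'I_n * 'I_n}) : rook_placement D -> rook_placement E ->
  (forall x : 'M[F]_n, Omega D x -> zariski_closure (Omega E) x) ->
  forall i j : nat, (j < i)%N ->
  (#|[set x in D | (i <= x.1)%N && (x.2 <= j)%N]| <=
   #|[set x in E | (i <= x.1)%N && (x.2 <= j)%N]|)%N.
Proof.
move=> hD hE hz i j ji.
set SD := [set x in D | _]; set SE := [set x in E | _].
rewrite leqNgt; apply/negP => lt.
pose r (s : 'I_#|SD|) : 'I_n := (enum_val s).1.
pose c (s : 'I_#|SD|) : 'I_n := (enum_val s).2.
have inSD : forall s, [/\ (r s, c s) \in D, (i <= r s)%N & (c s <= j)%N].
  move=> s; have := enum_valP s; rewrite /r /c -surjective_pairing !inE.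
  by case/andP => -> /andP[-> ->].
pose sub (x : 'M[F]_n) : 'M[F]_#|SD| := \matrix_(s, t) x (r s) (c t).
have hP := hz _ (fD_in_Omega hD) (detpoly r c).
rewrite !meval_detpoly -/(sub _) in hP.
have key1 : sub (@f_D F n D) = 1%:M.
  apply/matrixP => s t; rewrite !mxE.
  have [->|nst] := eqVneq s t; first by have [-> _ _] := inSD t.
  case: ifP => // h; exfalso; apply/negP: nst; apply/negPn/eqP; apply: enum_val_inj.
  have [hs _ _] := inSD s; have [ht _ _] := inSD t.
  have e1 := rook_row hD hs h erefl; have e2 := rook_col hD h ht erefl.
  case: e1 => e1; case: e2 => e2.
  by rewrite (surjective_pairing (enum_val s)) (surjective_pairing (enum_val t)) -/(r s) -/(c s) -/(r t) -/(c t) e1 e2.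
have key2 : forall y, Omega E y -> \det (sub y) = 0.
  move=> y [b [bB ->]].
  pose Bm : 'M[F]_(#|SD|, #|SE|) := \matrix_(s, t) b (r s) (enum_val t).1.
  pose Cm : 'M[F]_(#|SE|, #|SD|) := \matrix_(t, s') invmx b (enum_val t).2 (c s').
  have eq : sub (B_act b (@f_D F n E)) = Bm *m Cm.
    apply/matrixP => s s'; rewrite /sub /B_act /lowpart mxE [in LHS]mxE.
    have [_ hi _] := inSD s; have [_ _ hj] := inSD s'.
    have -> : (c s' < r s)%N by lia.
    transitivity (\sum_(x in SE) b (r s) x.1 * invmx b x.2 (c s')); last first.
      by rewrite big_enum_val [RHS]mxE; apply: eq_bigr => t _; rewrite !mxE.
    rewrite !mxE.
    under eq_bigr => v _ do rewrite mxE big_distrl.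
    rewrite exchange_big pair_big /= [RHS]big_mkcond /=.
    apply: eq_bigr => x _.
    rewrite !mxE -surjective_pairing inE.
    case: (x \in E); last by rewrite mulr0 mul0r.
    rewrite mulr1 /=; case: ifP => // hx.
    have [h1|h2] : (x.1 < i)%N \/ (j < x.2)%N.
      by move: hx => /negbT /nandP[]; rewrite -ltnNge; [left|right].
      by case: bB => _ bt; rewrite bt ?mul0r //; lia.
    by rewrite (invmx_upper bB) ?mulr0 //; lia.
  rewrite eq; case: (eqVneq (\det (Bm *m Cm)) 0) => // hdet; exfalso.
  have : Bm *m Cm \in unitmx by rewrite unitmxE unitfE.
  move/mxrank_unit => hr.
  have := leq_trans (mxrankM_maxl Bm Cm) (rank_leq_col Bm); rewrite hr; lia.
have : \det (sub (@f_D F n D)) = 0 by apply: hP => y hy; rewrite meval_detpoly; exact: key2.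
by rewrite key1 det1 => /eqP; rewrite oner_eq0.
Qed.

End Geo.

Lemma sigma_rk n (D : {set 'I_n * 'I_n}) (hD : rook_placement D) p q :
  rk (sigma_D D) p q = rk (1%g : {perm 'I_(n.*2 - 2)}) p q + \sum_(x in D) rect x p q.
Proof.
rewrite /sigma_D -[in LHS]big_filter -[in RHS]big_filter.
apply: (rk_prod hD); first by rewrite filter_uniq // index_enum_uniq.
by move=> x; rewrite mem_filter => /andP[].
Qed.

Lemma sum_rect_conv n (D : {set 'I_n * 'I_n}) (hD : rook_placement D) p q :
  (0 < minn p q)%N ->
  \sum_(x in D) rect x p q =
  #|[set x in D | ((maxn p q + 2) %/ 2 <= x.1)%N && (x.2 <= (minn p q - 1) %/ 2)%N]|.
Proof.
move=> hpos.
transitivity (\sum_(x in D) (((maxn p q + 2) %/ 2 <= x.1) && (x.2 <= (minn p q - 1) %/ 2) : nat)).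
  apply: eq_bigr => x xD; congr nat_of_bool; have := rook_lt hD xD.
  rewrite /rect /Av /Bv -!muln2; move: (nat_of_ord x.1) (nat_of_ord x.2) => r c h.
  apply/idP/idP; [move=> /and4P[? ? ? ?]|move=> /andP[? ?]]; repeat (apply/andP; split); lia.
rewrite -sum1_card big_mkcond [RHS]big_mkcond; apply: eq_bigr => x _; rewrite !inE.
by case: (x \in D); case: ((maxn p q + 2) %/ 2 <= x.1)%N; case: (x.2 <= (minn p q - 1) %/ 2)%N.
Qed.

Unset Implicit Arguments.
Import GRing.Theory.
Local Open Scope ring_scope.

Theorem corollary1p8 (F : closedFieldType) (hF : [pchar F] =i pred0)
  (n : nat) (hn : (2 <= n)%N) (D D' : {set 'I_n * 'I_n})
  (hD : rook_placement D) (hD' : rook_placement D') :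
  (forall x : 'M[F]_n, Omega D x -> zariski_closure (Omega D') x) ->
  bruhat_le (sigma_D D) (sigma_D D').
Proof.
move=> hz; apply: crit => p q; rewrite !sigma_rk // leq_add2l.
case: (posnP (minn p q)) => [h0|hpos].
  rewrite big1 // => x _; rewrite /rect; apply/eqP; rewrite eqb0.
  apply/negP => /and4P[h1 _ h3 _]; move: h0; lia.
rewrite !sum_rect_conv //; apply: (count_le hD hD' hz); lia.
Qed.
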